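(* Let $X$ be a finite $T_0$ topological space, $\mathcal V$ a multivector field on $X$ with $X$ invariant, and $\mathcal M=\{M_p\mid p\in\mathbb P\}$ a Morse predecomposition of $X$. If the strongly connected components of the digraph $G_{\mathcal M}$ form a partition $\mathcal Q$ of $\mathbb P$, then $\mathcal M':=\{M_Q\mid Q\in\mathcal Q\}$ is a Morse decomposition of $X$.
   Context: Notation: $\operatorname{cl}$ is closure; $A\subset X$ is locally closed if $\operatorname{cl}A\setminus A$ is closed. A multivector field $\mathcal V$ on $X$ is a partition of $X$ into locally closed sets (multivectors); $[x]_{\mathcal V}$ is the multivector containing $x$. A multivector $V$ is critical if $H(\operatorname{cl}V,\operatorname{cl}V\setminus V)$ (relative singular homology) is nontrivial, regular otherwise. $A$ is $\mathcal V$-compatible if it is a union of multivectors; $\langle A\rangle_{\mathcal V}$ is the smallest locally closed $\mathcal V$-compatible set containing $A$. $\Pi_{\mathcal V}(x)=\operatorname{cl}\{x\}\cup[x]_{\mathcal V}$. A solution is a partial map $\gamma:\mathbb Z\nrightarrow X$ with domain an integer interval and $\gamma(t+1)\in\Pi_{\mathcal V}(\gamma(t))$; a path has finite domain; a full solution has domain $\mathbb Z$. $\alpha(\gamma)=\langle\bigcap_{t\le0}\gamma((-\infty,t])\rangle_{\mathcal V}$, $\omega(\gamma)=\langle\bigcap_{t\ge0}\gamma([t,\infty))\rangle_{\mathcal V}$. A full solution is essential unless $\alpha(\gamma)$ or $\omega(\gamma)$ lies in a single regular multivector; an essential solution in $A$ has image in $A$. $\operatorname{Inv}S$ is the set of $x\in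 S$ with an essential solution $\gamma$ in $S$, $\gamma(0)=x$; $S$ is invariant if $\operatorname{Inv}S=S$. An invariant $S$ is isolated invariant if there is a closed $N\supset\Pi_{\mathcal V}(S)$ such that every path in $N$ with endpoints in $S$ has image in $S$. A link from $S_1$ to $S_2$ is a full solution $\gamma$ with $\alpha(\gamma)\cap S_1\ne\emptyset\ne\omega(\gamma)\cap S_2$; a link from $M_p$ to $M_q$ is trivial if $p=q$ and $\operatorname{im}\gamma\subset M_p$, non-trivial otherwise. A Morse predecomposition of $X$ is an indexed family $\{M_p\mid p\in\mathbb P\}$ of mutually disjoint isolated invariant subsets such that every essential solution in $X$ is a link from some $M_p$ to some $M_q$. $G_{\mathcal M}$ is the digraph with vertex set $\mathbb P$ and an edge $p\to q$ iff there is a non-trivial link from $M_p$ to $M_q$. A vertex set $A$ is strongly connected if for all $v,w\in A$ there is a walk of positive length from $v$ to $w$ inside $A$; a strongly connected component is an inclusion-maximal strongly connected set. A preorder $\le$ on $\mathbb P$ is admissible if a link from $M_p$ to $M_q$ implies $q\le p$. An invariant $T$ is saturated if every essential solution $\gamma$ in $X$ with $\alpha(\gamma)\cup\omega(\gamma)\subset T$ has $\operatorname{im}\gamma\subset T$. A Morse decomposition is a Morse predecomposition all of whose members are saturated and for which some admissible preorder is a partial order (here $\mathcal M'$ is indexed by $\mathcal Q$). $\mathbb P_C=\{p\mid M_p\cap C\ne\emptyset\}$; for $Q\subset\mathbb P$, $\operatorname{eSol}_Q(X)$ is the set of essential solutions $\gamma$ in $X$ with $\mathbb P_{\alpha(\gamma)}\cap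 Q\ne\emptyset\ne\mathbb P_{\omega(\gamma)}\cap Q$, and $M_Q=\bigcup\{\operatorname{im}\gamma\mid\gamma\in\operatorname{eSol}_Q(X)\}$. *)

(* Defs.v *)
From HB Require Import structures.
From mathcomp Require Import all_boot all_order all_algebra.
From mathcomp Require Import boolp.
From Stdlib Require Import Relations.
Set Implicit Arguments. Unset Strict Implicit. Unset Printing Implicit Defensive.
Import GRing.Theory Num.Theory.

(* n-simplices of the order complex: maps 'I_(n+1) -> T *)
Notation simplex T n := {ffun 'I_n.+1 -> T}.
Notation hchain T n := {ffun simplex T n -> int}.

Section Space.
Variable T : finType.
Variable opens : {set {set T}}.

Definition is_topology : Prop :=
  [/\ set0 \in opens, [set: T] \in opens,
      (forall U V, U \in opens -> V \in opens -> U :|: V \in opens) &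
      (forall U V, U \in opens -> V \in opens -> U :&: V \in opens)].

Definition T0_space : Prop :=
  forall x y : T, x != y -> exists2 U, U \in opens & (x \in U) != (y \in U).

Definition is_closed (C : {set T}) : bool := ~: C \in opens.

Definition cl (A : {set T}) : {set T} :=
  \bigcap_(U in opens | A \subset ~: U) ~: U.

Definition locally_closed (A : {set T}) : bool := is_closed (cl A :\: A).

Definition spec_lt (x y : T) : bool := (x \in cl [set y]) && (x != y).

Definition is_simplex_in n (A : {set T}) (s : simplex T n) : bool :=
  [forall i, s i \in A] &&
  [forall i : 'I_n.+1, forall j : 'I_n.+1, (i < j)%N ==> spec_lt (s i) (s j)].

Definition supported_on n (A : {set T}) (c : hchain T n) : Prop :=
  forall s, c s != 0%R -> is_simplex_in A s.

Definition face n (i : 'I_n.+2) (s : simplex T n.+1) : simplex T n :=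
  [ffun j => s (lift i j)].

Definition bd n (c : hchain T n.+1) : hchain T n :=
  [ffun t => (\sum_(s : simplex T n.+1) \sum_(i < n.+2)
               (if face i s == t then (-1) ^+ i * c s else 0))%R].

Definition rel_boundary n (A B : {set T}) (c : hchain T n) : Prop :=
  exists (d : hchain T n.+1) (e : hchain T n),
    [/\ supported_on A d, supported_on B e & forall s, c s = (bd d s + e s)%R].

(* H(A, B) <> 0 : some relative cycle is not a relative boundary *)
Definition rel_homology_nontrivial (A B : {set T}) : Prop :=
  (exists c : hchain T 0, supported_on A c /\ ~ rel_boundary A B c) \/
  (exists n (c : hchain T n.+1),
      [/\ supported_on A c, supported_on B (bd c) & ~ rel_boundary A B c]).

Variable Vf : {set {set T}}.

Definition multivector_field : Prop :=
  partition Vf [set: T] /\ forall V, V \in Vf -> locally_closed V.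

Definition critical (V : {set T}) : Prop :=
  rel_homology_nontrivial (cl V) (cl V :\: V).
Definition regular (V : {set T}) : Prop := ~ critical V.

Definition compatible (A : {set T}) : bool :=
  [exists W : {set {set T}}, (W \subset Vf) && (A == cover W)].

Definition hull (A : {set T}) : {set T} :=
  \bigcap_(B : {set T} | [&& A \subset B, locally_closed B & compatible B]) B.

Definition Pi (x : T) : {set T} := cl [set x] :|: pblock Vf x.
Definition Pi_set (S : {set T}) : {set T} := \bigcup_(x in S) Pi x.

Definition full_solution (g : int -> T) : Prop :=
  forall t : int, g (t + 1)%R \in Pi (g t).

Definition alpha_raw (g : int -> T) : {set T} :=
  [set x | `[< forall t : int, (t <= 0)%R -> exists s : int, (s <= t)%R /\ g s = x >]].
Definition omega_raw (g : int -> T) : {set T} :=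
  [set x | `[< forall t : int, (0 <= t)%R -> exists s : int, (t <= s)%R /\ g s = x >]].
Definition alpha g := hull (alpha_raw g).
Definition omega g := hull (omega_raw g).

Definition essential (g : int -> T) : Prop :=
  [/\ full_solution g,
      ~ (exists2 V, V \in Vf & regular V /\ alpha g \subset V) &
      ~ (exists2 V, V \in Vf & regular V /\ omega g \subset V)].

Definition ess_in (A : {set T}) (g : int -> T) : Prop :=
  essential g /\ forall t, g t \in A.

Definition Inv (S : {set T}) : {set T} :=
  [set x in S | `[< exists g, ess_in S g /\ g 0%R = x >]].

Definition is_invariant (S : {set T}) : Prop := Inv S = S.

Definition Pi_rel : rel T := fun x y => y \in Pi x.

(* paths = nonempty finite sequences x :: s *)
Definition isolated_invariant (S : {set T}) : Prop :=
  is_invariant S /\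
  exists N : {set T}, [/\ is_closed N, Pi_set S \subset N &
    forall x s, path Pi_rel x s -> all (mem N) (x :: s) ->
      x \in S -> last x s \in S -> all (mem S) (x :: s)].

Definition link (S1 S2 : {set T}) (g : int -> T) : Prop :=
  [/\ full_solution g, alpha g :&: S1 != set0 & omega g :&: S2 != set0].

Section Family.
Variable I : Type.
Variable M : I -> {set T}.

Definition morse_predecomposition : Prop :=
  [/\ forall p q, p <> q -> M p :&: M q = set0,
      forall p, isolated_invariant (M p) &
      forall g, ess_in [set: T] g -> exists p q, link (M p) (M q) g].

Definition nontrivial_link (p q : I) (g : int -> T) : Prop :=
  link (M p) (M q) g /\ ~ (p = q /\ forall t, g t \in M p).

Definition edge (p q : I) : Prop := exists g, nontrivial_link p q g.

Definition admissible (R : I -> I -> Prop) : Prop :=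
  forall p q g, link (M p) (M q) g -> R q p.

Definition saturated (S : {set T}) : Prop :=
  is_invariant S /\
  forall g, ess_in [set: T] g -> alpha g :|: omega g \subset S ->
    forall t, g t \in S.

Definition morse_decomposition : Prop :=
  [/\ morse_predecomposition,
      forall p, saturated (M p) &
      exists R : I -> I -> Prop,
        [/\ reflexive _ R, transitive _ R, antisymmetric _ R & admissible R]].
End Family.

Section Graph.
Variable P : finType.
Variable M : P -> {set T}.

Definition strongly_connected (A : {set P}) : Prop :=
  forall v w, v \in A -> w \in A ->
    clos_trans P (fun a b => [/\ a \in A, b \in A & edge M a b]) v w.

Definition scc (A : {set P}) : Prop :=
  strongly_connected A /\
  forall B, strongly_connected B -> A \subset B -> B = A.

Definition M_of (Q : {set P}) : {set T} :=
  [set x | `[< exists g, [/\ ess_in [set: T] g,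
      (exists2 p, p \in Q & M p :&: alpha g != set0),
      (exists2 q, q \in Q & M q :&: omega g != set0) &
      exists t, g t = x] >]].
End Graph.

End Space.

(* Main.v *)
Require Import Defs.
From HB Require Import structures.
From mathcomp Require Import all_boot all_order all_algebra.
From mathcomp Require Import boolp.
From mathcomp Require Import zify.
From Stdlib Require Import Relations.
Set Implicit Arguments. Unset Strict Implicit. Unset Printing Implicit Defensive.
Import Order.TTheory GRing.Theory Num.Theory.

Section Topo.
Variable T : finType.
Variable opens : {set {set T}}.
Variable Vf : {set {set T}}.
Hypothesis htop : is_topology opens.
Hypothesis hVf : multivector_field opens Vf.

Definition rch := clos_refl_trans T (Pi_rel opens Vf).

Lemma sub_cl (A : {set T}) : A \subset cl opens A.
Proof.
apply/subsetP => x xA; apply/bigcapP => U /andP[_ sub]; exact: (subsetP sub).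
Qed.

Lemma cl_closed (A : {set T}) : ~: cl opens A \in opens.
Proof.
case: htop => h0 hT hU hI.
rewrite /cl setC_bigcap; apply: (big_ind (fun X : {set T} => X \in opens)) => //.
by move=> U /andP[Uo _]; rewrite setCK.
Qed.

Definition mn (z : T) : {set T} := \bigcap_(V in opens | z \in V) V.

Lemma mn_open z : mn z \in opens.
Proof. case: htop => h0 hT hU hI; apply: (big_ind (fun X : {set T} => X \in opens)) => // V /andP[] //. Qed.

Lemma mem_mn z : z \in mn z.
Proof. by apply/bigcapP => V /andP[]. Qed.

Lemma mn_sub z V : V \in opens -> z \in V -> mn z \subset V.
Proof. by move=> Vo zV; apply: bigcap_inf; rewrite Vo zV. Qed.

Lemma clP x (A : {set T}) : reflect (exists2 y, y \in A & y \in mn x) (x \in cl opens A).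
Proof.
apply: (iffP idP).
  move=> hx; case: (pselect (exists2 y, y \in A & y \in mn x)) => // hno.
  have sub : A \subset ~: mn x.
    by apply/subsetP => y yA; rewrite inE; apply/negP => ym; apply: hno; exists y.
  have := bigcapP hx (mn x); rewrite mn_open sub => /(_ isT).
  by rewrite inE mem_mn.
move=> [y yA ym]; apply/bigcapP => U /andP[Uo AU]; rewrite inE; apply/negP => xU.
have := subsetP AU y yA; rewrite inE => /negP; apply.
exact: (subsetP (mn_sub Uo xU)).
Qed.

Lemma mn_trans y z : y \in mn z -> mn y \subset mn z.
Proof. move=> h; exact: mn_sub (mn_open z) h. Qed.

Lemma cl1P x y : reflect (y \in mn x) (x \in cl opens [set y]).
Proof.
apply: (iffP (clP x [set y])).
  by move=> [y' ]; rewrite inE => /eqP ->.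
by move=> h; exists y; rewrite ?inE.
Qed.

Lemma Pi_cl x y : y \in cl opens [set x] -> Pi_rel opens Vf x y.
Proof. by move=> h; rewrite /Pi_rel /Pi inE h. Qed.

Lemma Pi_blk x y : y \in pblock Vf x -> Pi_rel opens Vf x y.
Proof. by move=> h; rewrite /Pi_rel /Pi inE h orbT. Qed.

Lemma Pi_refl x : Pi_rel opens Vf x x.
Proof. apply: Pi_cl; apply: (subsetP (sub_cl _)); exact: set11. Qed.

Definition Dset (S : {set T}) : {set T} :=
  [set y | `[< (exists2 s1, s1 \in S & rch s1 y) /\ (exists2 s2, s2 \in S & rch y s2) >]].

Lemma DsetP (S : {set T}) y : y \in Dset S <-> (exists2 s1, s1 \in S & rch s1 y) /\ (exists2 s2, s2 \in S & rch y s2).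
Proof. by rewrite inE; split => /asboolP. Qed.

Lemma Dset_lc (S : {set T}) : locally_closed opens (Dset S).
Proof.
set D := Dset S; set E := cl opens D :\: D.
have clE : cl opens E \subset E.
  apply/subsetP => z zE.
  have zD : z \in cl opens D.
    case/clP: zE => e; rewrite inE => /andP[_ eD] ez.
    case/clP: eD => d dD de; apply/clP; exists d => //.
    exact: (subsetP (mn_trans ez)).
  rewrite inE zD andbT; apply/negP => zinD.
  case/clP: zE => e; rewrite inE => /andP[enD eD] ez.
  case/clP: eD => d dD de.
  move/negP: enD; apply; apply/DsetP.
  case/DsetP: dD => [[s1 s1S r1] _]; case/DsetP: zinD => [_ [s2 s2S r2]].
  split; [exists s1 => //|exists s2 => //].
    apply: rt_trans r1 _; apply: rt_step; apply: Pi_cl; exact/cl1P.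
  apply: rt_trans r2; apply: rt_step; apply: Pi_cl; exact/cl1P.
rewrite /locally_closed -/E.
have -> : E = cl opens E by apply/eqP; rewrite eqEsubset sub_cl clE.
rewrite /is_closed; exact: cl_closed.
Qed.

Lemma Dset_compat (S : {set T}) : compatible Vf (Dset S).
Proof.
case: hVf => /and3P[/eqP hcov htriv _] _.
have inpb y : y \in pblock Vf y by rewrite mem_pblock hcov inE.
have clo y z : y \in Dset S -> z \in pblock Vf y -> z \in Dset S.
  move=> /DsetP [[s1 s1S r1] [s2 s2S r2]] zy; apply/DsetP; split.
    exists s1 => //; apply: rt_trans r1 _; apply: rt_step; exact: Pi_blk.
  exists s2 => //; apply: rt_trans r2; apply: rt_step; apply: Pi_blk.
  by rewrite (same_pblock htriv zy).
apply/existsP; exists [set V in Vf | V \subset Dset S]; apply/andP; split.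
  by apply/subsetP => V; rewrite inE => /andP[].
apply/eqP/setP => y; apply/idP/idP.
  move=> yD; apply/bigcupP; exists (pblock Vf y) => //.
  rewrite inE pblock_mem ?hcov ?inE //=.
  by apply/subsetP => z; apply: clo.
by case/bigcupP => V; rewrite inE => /andP[_ sub] yV; exact: (subsetP sub).
Qed.

Lemma sub_Dset (S : {set T}) : S \subset Dset S.
Proof.
apply/subsetP => s sS; apply/DsetP; split; exists s => //; exact: rt_refl.
Qed.

Lemma hull_Dset (S : {set T}) : hull opens Vf S \subset Dset S.
Proof. by apply: bigcap_inf; rewrite sub_Dset Dset_lc Dset_compat. Qed.

Lemma sub_hull (S : {set T}) : S \subset hull opens Vf S.
Proof. apply/subsetP => x xS; apply/bigcapP => B /and3P[sub _ _]; exact: (subsetP sub). Qed.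

End Topo.

Local Open Scope ring_scope.

Ltac cif := case: ifP => [/idP ?|/negbT ?]; lia.

Section Sol.
Variable T : finType.
Variable opens : {set {set T}}.
Variable Vf : {set {set T}}.
Hypothesis htop : is_topology opens.
Hypothesis hVf : multivector_field opens Vf.

Lemma alpha_rawP (g : int -> T) x :
  x \in alpha_raw g <-> forall t : int, t <= 0 -> exists s : int, s <= t /\ g s = x.
Proof. by rewrite inE; split => /asboolP. Qed.

Lemma omega_rawP (g : int -> T) x :
  x \in omega_raw g <-> forall t : int, 0 <= t -> exists s : int, t <= s /\ g s = x.
Proof. by rewrite inE; split => /asboolP. Qed.

Lemma rch_le g s t : full_solution opens Vf g -> s <= t -> rch opens Vf (g s) (g t).
Proof.
move=> hg hst.
have -> : t = s + (absz (t - s))%:Z by lia.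
elim: (absz (t - s)) => [|n IH]; first by rewrite addr0; exact: rt_refl.
apply: rt_trans IH _; apply: rt_step.
have -> : s + n.+1%:Z = (s + n%:Z) + 1 by lia.
exact: hg.
Qed.

Lemma alpha_reach g y : full_solution opens Vf g -> y \in alpha opens Vf g ->
  forall t, rch opens Vf y (g t).
Proof.
move=> hg /(subsetP (hull_Dset htop hVf _)) /DsetP [_ [s2 /alpha_rawP hs2 r]] t.
have [s [hs e]] : exists s : int, s <= t /\ g s = s2.
  case: (boolP (t <= 0)) => ht; first exact: hs2.
  have [s [hs1 hs2']] := hs2 0 (lexx 0); exists s; split => //; lia.
rewrite -e in r; exact: rt_trans r (rch_le hg hs).
Qed.

Lemma omega_reach g z : full_solution opens Vf g -> z \in omega opens Vf g ->
  forall t, rch opens Vf (g t) z.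
Proof.
move=> hg /(subsetP (hull_Dset htop hVf _)) /DsetP [[s1 /omega_rawP hs1 r] _] t.
have [s [hs e]] : exists s : int, t <= s /\ g s = s1.
  case: (boolP (0 <= t)) => ht; first exact: hs1.
  have [s [hs1' hs2']] := hs1 0 (lexx 0); exists s; split => //; lia.
rewrite -e in r; exact: rt_trans (rch_le hg hs) r.
Qed.

Lemma alpha_raw_ne (g : int -> T) : exists x, x \in alpha_raw g.
Proof.
suff H : forall n (S : {set T}), (#|S| <= n)%N ->
    (forall t : int, t <= 0 -> exists2 s : int, s <= t & g s \in S) ->
    exists x, x \in alpha_raw g.
  apply: (H #|[set: T]| [set: T]) => // t _; exists t; rewrite ?inE //.
elim => [|n IH] S hS hp.
  move: hS; rewrite leqn0 => /eqP /cards0_eq hS0.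
  by have [s _] := hp 0 (lexx 0); rewrite hS0 inE.
have [s _ gs] := hp 0 (lexx 0).
case: (pselect (g s \in alpha_raw g)) => [h|h]; first by exists (g s).
have [tx [htx hno]] : exists tx : int, tx <= 0 /\ forall s', s' <= tx -> g s' != g s.
  case: (pselect (exists tx : int, tx <= 0 /\ forall s', s' <= tx -> g s' != g s)) => // hn.
  exfalso; apply: h; apply/alpha_rawP => t ht.
  case: (pselect (exists s' : int, s' <= t /\ g s' = g s)) => // hn2.
  exfalso; apply: hn; exists t; split => // s' hs'; apply/eqP => e; apply: hn2; by exists s'.
apply: (IH (S :\ g s)).
  by move: hS; rewrite (cardsD1 (g s)) gs.
move=> t ht.
have [s' hs' gs'] := hp (if t <= tx then t else tx) ltac:(cif).
exists s'; first by move: hs'; cif.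
rewrite !inE gs' andbT; apply: hno; move: hs'; cif.
Qed.

Lemma omega_raw_ne (g : int -> T) : exists x, x \in omega_raw g.
Proof.
suff H : forall n (S : {set T}), (#|S| <= n)%N ->
    (forall t : int, 0 <= t -> exists2 s : int, t <= s & g s \in S) ->
    exists x, x \in omega_raw g.
  apply: (H #|[set: T]| [set: T]) => // t _; exists t; rewrite ?inE //.
elim => [|n IH] S hS hp.
  move: hS; rewrite leqn0 => /eqP /cards0_eq hS0.
  by have [s _] := hp 0 (lexx 0); rewrite hS0 inE.
have [s _ gs] := hp 0 (lexx 0).
case: (pselect (g s \in omega_raw g)) => [h|h]; first by exists (g s).
have [tx [htx hno]] : exists tx : int, 0 <= tx /\ forall s', tx <= s' -> g s' != g s.
  case: (pselect (exists tx : int, 0 <= tx /\ forall s', tx <= s' -> g s' != g s)) => // hn.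
  exfalso; apply: h; apply/omega_rawP => t ht.
  case: (pselect (exists s' : int, t <= s' /\ g s' = g s)) => // hn2.
  exfalso; apply: hn; exists t; split => // s' hs'; apply/eqP => e; apply: hn2; by exists s'.
apply: (IH (S :\ g s)).
  by move: hS; rewrite (cardsD1 (g s)) gs.
move=> t ht.
have [s' hs' gs'] := hp (if tx <= t then t else tx) ltac:(cif).
exists s'; first by move: hs'; cif.
rewrite !inE gs' andbT; apply: hno; move: hs'; cif.
Qed.

Lemma alpha_raw_shift (g : int -> T) d : alpha_raw (fun t => g (t + d)) = alpha_raw g.
Proof.
apply/setP => x; apply/idP/idP => /alpha_rawP h; apply/alpha_rawP => t ht.
  have [s [hs <-]] := h (if t - d <= 0 then t - d else 0) ltac:(cif).
  exists (s + d); split => //; move: hs; cif.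
have [s [hs <-]] := h (if t + d <= 0 then t + d else 0) ltac:(cif).
exists (s - d); split; first by move: hs; cif.
by rewrite subrK.
Qed.

Lemma omega_raw_shift (g : int -> T) d : omega_raw (fun t => g (t + d)) = omega_raw g.
Proof.
apply/setP => x; apply/idP/idP => /omega_rawP h; apply/omega_rawP => t ht.
  have [s [hs <-]] := h (if 0 <= t - d then t - d else 0) ltac:(cif).
  exists (s + d); split => //; move: hs; cif.
have [s [hs <-]] := h (if 0 <= t + d then t + d else 0) ltac:(cif).
exists (s - d); split; first by move: hs; cif.
by rewrite subrK.
Qed.

Lemma alpha_raw_eq0 (g g' : int -> T) : (forall t, t <= 0 -> g t = g' t) ->
  alpha_raw g = alpha_raw g'.
Proof.
move=> e; apply/setP => x; apply/idP/idP => /alpha_rawP h; apply/alpha_rawP => t ht;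
  have [s [hs <-]] := h t ht; exists s; split => //; rewrite e //; lia.
Qed.

Lemma omega_raw_eqc (g g' : int -> T) c : (forall t, c <= t -> g t = g' t) ->
  omega_raw g = omega_raw g'.
Proof.
move=> e; apply/setP => x; apply/idP/idP => /omega_rawP h; apply/omega_rawP => t ht;
  have [s [hs <-]] := h (if c <= t then t else c) ltac:(cif);
  exists s; (split; first by move: hs; cif);
  rewrite e //; move: hs; cif.
Qed.

Lemma full_shift g d : full_solution opens Vf g -> full_solution opens Vf (fun t => g (t + d)).
Proof. by move=> hg t /=; rewrite addrAC; exact: hg. Qed.

End Sol.



Section Glue.
Variable T : finType.
Variable opens : {set {set T}}.
Variable Vf : {set {set T}}.
Hypothesis htop : is_topology opens.
Hypothesis hVf : multivector_field opens Vf.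

Local Notation full := (full_solution opens Vf).

Lemma FP x y : rch opens Vf x y -> forall g2, full g2 -> g2 0 = y ->
  exists g3 d, [/\ full g3, g3 0 = x, 0 <= d & forall t, 0 <= t -> g3 (t + d) = g2 t].
Proof.
move=> hr; move: (@clos_rt_rt1n _ _ _ _ hr); clear hr; elim => {x y} [x|x x' y hxx' _ IH] g2 hg2 g20.
  by exists g2, 0; split => // t _; rewrite addr0.
have [g'' [d'' [hg'' g''0 hd'' hsh]]] := IH g2 hg2 g20.
exists (fun t => if t <= 0 then x else g'' (t - 1)), (d'' + 1); split.
- move=> t /=; case: ifP => [/idP h1|/negbT h1].
    have -> : t <= 0 by lia.
    exact: Pi_refl.
  case: ifP => [/idP h2|/negbT h2].
    have -> : t + 1 - 1 = 0 by lia.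
    by rewrite g''0.
  have -> : t + 1 - 1 = (t - 1) + 1 by lia.
  exact: hg''.
- by rewrite lexx.
- lia.
- move=> t ht /=; case: ifP => [/idP h|/negbT h]; first lia.
  rewrite -hsh //; congr g''; lia.
Qed.

Lemma glue g1 g3 : full g1 -> full g3 -> g1 0 = g3 0 ->
  exists h, [/\ full h, alpha_raw h = alpha_raw g1, omega_raw h = omega_raw g3
             & forall t, 0 <= t -> h t = g3 t].
Proof.
move=> hg1 hg3 e.
exists (fun t => if t <= 0 then g1 t else g3 t); split.
- move=> t /=; case: ifP => [/idP h1|/negbT h1].
    have -> : t <= 0 by lia.
    exact: hg1.
  case: ifP => [/idP h2|/negbT h2]; last exact: hg3.
  have -> : t = 0 by lia.
  by rewrite e add0r; exact: hg3.
- by apply: alpha_raw_eq0 => t /= ->.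
- by apply: (@omega_raw_eqc _ _ _ 1) => t /= h; case: ifP => [/idP ?|//]; lia.
- move=> t ht /=; case: ifP => [/idP h|//].
  by have -> : t = 0 by lia.
Qed.

Lemma sub_alpha g : alpha_raw g \subset alpha opens Vf g.
Proof. exact: sub_hull. Qed.
Lemma sub_omega g : omega_raw g \subset omega opens Vf g.
Proof. exact: sub_hull. Qed.

Lemma inv_sol (S : {set T}) w : is_invariant opens Vf S -> w \in S ->
  exists g, ess_in opens Vf S g /\ g 0 = w.
Proof.
by move=> hinv wS; move: wS; rewrite -{1}hinv inE => /andP[_ /asboolP].
Qed.

Lemma GLUE (Sp Sq : {set T}) w w' x :
  is_invariant opens Vf Sp -> is_invariant opens Vf Sq ->
  w \in Sp -> w' \in Sq -> rch opens Vf w x -> rch opens Vf x w' ->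
  exists h, [/\ essential opens Vf h, Sp :&: alpha opens Vf h != set0,
    Sq :&: omega opens Vf h != set0 & exists t, h t = x].
Proof.
move=> ip iq wp wq r1 r2.
have [g1 [[[hg1 ha1 ho1] in1] g10]] := inv_sol ip wp.
have [g2 [[[hg2 ha2 ho2] in2] g20]] := inv_sol iq wq.
have [g2' [d1 [hg2' g2'0 hd1 sh1]]] := FP r2 hg2 g20.
have [g3 [d2 [hg3 g30 hd2 sh2]]] := FP r1 hg2' g2'0.
have [h [hh ah oh eh]] := glue hg1 hg3 (etrans g10 (esym g30)).
have o3 : omega_raw g3 = omega_raw g2'.
  by rewrite -(omega_raw_shift g3 d2); apply: (@omega_raw_eqc _ _ _ 0) => t /= /sh2.
have o2 : omega_raw g2' = omega_raw g2.
  by rewrite -(omega_raw_shift g2' d1); apply: (@omega_raw_eqc _ _ _ 0) => t /= /sh1.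
have eA : alpha opens Vf h = alpha opens Vf g1 by rewrite /alpha ah.
have eO : omega opens Vf h = omega opens Vf g2 by rewrite /omega oh o3 o2.
exists h; split.
- by split => //; rewrite ?eA ?eO.
- have [a ha] := alpha_raw_ne g1.
  apply/set0Pn; exists a; rewrite inE eA (subsetP (sub_alpha g1)) // andbT.
  have [s [_ <-]] := (alpha_rawP g1 a).1 ha 0 (lexx 0); exact: in1.
- have [a ha] := omega_raw_ne g2.
  apply/set0Pn; exists a; rewrite inE eO (subsetP (sub_omega g2)) // andbT.
  have [s [_ <-]] := (omega_rawP g2 a).1 ha 0 (lexx 0); exact: in2.
- exists d2; rewrite eh // -g2'0 -sh2 ?lexx // add0r //.
Qed.

End Glue.

Lemma ct_crt (A : Type) (R : relation A) x y z :
  clos_trans A R x y -> clos_refl_trans A R y z -> clos_trans A R x z.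
Proof.
move=> h1 h2; elim: h2 x h1 => [u v e|u|u v w _ IH1 _ IH2] x h1 //.
  exact: t_trans h1 (t_step _ _ _ _ e).
exact: IH2 (IH1 x h1).
Qed.

Lemma path_rch (T : finType) (opens Vf : {set {set T}}) x s u :
  path (Pi_rel opens Vf) x s -> u \in x :: s ->
  rch opens Vf x u /\ rch opens Vf u (last x s).
Proof.
elim: s x u => [|y s IH] x u /=.
  by move=> _; rewrite inE => /eqP ->; split; exact: rt_refl.
move=> /andP[hxy hp]; rewrite inE => /orP[/eqP ->|hu].
  split; first exact: rt_refl.
  exact: rt_trans (rt_step _ _ _ _ hxy) (IH y y hp (mem_head _ _)).2.
have [h1 h2] := IH y u hp hu; split => //; exact: rt_trans (rt_step _ _ _ _ hxy) h1.
Qed.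

Section Morse.
Variable T : finType.
Variable opens : {set {set T}}.
Variable Vf : {set {set T}}.
Hypothesis htop : is_topology opens.
Hypothesis hVf : multivector_field opens Vf.
Variable P : finType.
Variable M : P -> {set T}.
Variable Qs : {set {set P}}.
Hypothesis hpre : morse_predecomposition opens Vf M.
Hypothesis hQ : forall A : {set P}, A \in Qs <-> scc opens Vf M A.
Hypothesis hpart : partition Qs [set: P].

Definition reach := clos_refl_trans P (edge opens Vf M).

Lemma inv_M p : is_invariant opens Vf (M p).
Proof. by case: hpre => _ h _; case: (h p). Qed.

Lemma Klem p q w w' : w \in M p -> w' \in M q -> rch opens Vf w w' -> reach p q.
Proof.
move=> wp wq r; case: (eqVneq p q) => [->|npq]; first exact: rt_refl.
have [h [[hh _ _] ha ho _]] := GLUE (inv_M p) (inv_M q) wp wq r (rt_refl _ _ _).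
apply: rt_step; exists h; split; first by split => //; rewrite setIC.
by case=> e; rewrite e eqxx in npq.
Qed.

Lemma MQ_elim (A : {set P}) x : x \in M_of opens Vf M A -> exists p q w w',
  [/\ p \in A, q \in A, w \in M p, w' \in M q & rch opens Vf w x /\ rch opens Vf x w'].
Proof.
rewrite inE => /asboolP [g [[[hg _ _] _] [p pA hw] [q qA hw'] [t <-]]].
case/set0Pn: hw => w; rewrite inE => /andP[wp wa].
case/set0Pn: hw' => w'; rewrite inE => /andP[wq wo].
exists p, q, w, w'; split => //; split.
  by have := alpha_reach htop hVf hg wa t.
by have := omega_reach htop hVf hg wo t.
Qed.

Lemma MQ_intro (A : {set P}) p q w w' x : p \in A -> q \in A -> w \in M p -> w' \in M q ->
  rch opens Vf w x -> rch opens Vf x w' -> x \in M_of opens Vf M A.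
Proof.
move=> pA qA wp wq r1 r2.
have [h [he ha ho [t ht]]] := GLUE (inv_M p) (inv_M q) wp wq r1 r2.
rewrite inE; apply/asboolP; exists h; split.
- by split => // s; rewrite inE.
- by exists p.
- by exists q.
- by exists t.
Qed.

Lemma Mp_sub (A : {set P}) p : p \in A -> M p \subset M_of opens Vf M A.
Proof. by move=> pA; apply/subsetP => x xp; apply: (MQ_intro pA pA xp xp); exact: rt_refl. Qed.

Lemma within (A : {set P}) a a' : A \in Qs -> a \in A -> a' \in A -> reach a a'.
Proof.
move=> hA ha ha'; have [sc _] := (hQ A).1 hA.
elim: (sc a a' ha ha') => [x y [_ _ e]|x y z _ IH1 _ IH2]; [exact: rt_step|exact: rt_trans IH1 IH2].
Qed.

Lemma blk_ne (A : {set P}) : A \in Qs -> exists a, a \in A.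
Proof.
move=> hA; case/and3P: hpart => _ _ h0; apply/set0Pn.
by apply/negP => /eqP e; rewrite -e hA in h0.
Qed.

Lemma blk_eq (A B : {set P}) b : A \in Qs -> B \in Qs -> b \in A -> b \in B -> A = B.
Proof.
case/and3P: hpart => _ tr _ hA hB bA bB.
by rewrite -(def_pblock tr hA bA) (def_pblock tr hB bB).
Qed.

Lemma blk_mem p : pblock Qs p \in Qs.
Proof. by case/and3P: hpart => /eqP hc _ _; rewrite pblock_mem // hc inE. Qed.

Lemma in_blk p : p \in pblock Qs p.
Proof. by case/and3P: hpart => /eqP hc _ _; rewrite mem_pblock hc inE. Qed.

Lemma Flem (A B : {set P}) a b : A \in Qs -> B \in Qs -> a \in A -> b \in B ->
  reach a b -> reach b a -> A = B.
Proof.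
move=> hA hB ha hb rab rba.
set C := [set v | `[< reach a v /\ reach v a >]].
have CP v : v \in C <-> reach a v /\ reach v a by rewrite inE; split => /asboolP.
set RC := fun u v => [/\ u \in C, v \in C & edge opens Vf M u v].
have path_in u v : reach u v -> u \in C -> v \in C -> clos_refl_trans P RC u v.
  move=> r; move: (@clos_rt_rt1n _ _ _ _ r); clear r.
  elim => [x|x x' y e h1n IH] xC yC; first exact: rt_refl.
  have x'C : x' \in C.
    case/CP: xC => r1 r2; case/CP: yC => r3 r4; apply/CP; split.
      exact: rt_trans r1 (rt_step _ _ _ _ e).
    exact: rt_trans (clos_rt1n_rt _ _ _ _ h1n) r4.
  exact: rt_trans (rt_step _ _ _ _ (And3 xC x'C e)) (IH x'C yC).
have AC : A \subset C.
  by apply/subsetP => a' ha'; apply/CP; split; [exact: within hA ha ha' | exact: within hA ha' ha].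
have aC : a \in C by exact: (subsetP AC).
have [sc hmax] := (hQ A).1 hA.
have lift : forall x y, clos_trans P (fun u v => [/\ u \in A, v \in A & edge opens Vf M u v]) x y -> clos_trans P RC x y.
  move=> x y; elim => [x' y' [xA yA e]|x' y' z' _ IH1 _ IH2].
    by apply: t_step; split; [exact: (subsetP AC x' xA)|exact: (subsetP AC y' yA)|].
  exact: t_trans IH1 IH2.
have loop := lift a a (sc a a ha ha).
have scC : strongly_connected opens Vf M C.
  move=> v w vC wC.
  apply: (@clos_rt_t _ _ _ a); first by apply: path_in => //; case/CP: vC => _.
  by apply: ct_crt loop _; apply: path_in => //; case/CP: wC.
have eC := hmax C scC AC.
have bC : b \in C by apply/CP.
by apply: blk_eq hA hB _ hb; rewrite -eC.
Qed.

Lemma DJ (A B : {set P}) x : A \in Qs -> B \in Qs -> x \in M_of opens Vf M A -> x \in M_of opens Vf M B -> A = B.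
Proof.
move=> hA hB xA xB.
have [p1 [q1 [w1 [w1' [p1A q1A w1p w1q [r1 r1']]]]]] := MQ_elim xA.
have [p2 [q2 [w2 [w2' [p2B q2B w2p w2q [r2 r2']]]]]] := MQ_elim xB.
have k1 : reach p1 q2 by apply: (Klem w1p w2q); exact: rt_trans r1 r2'.
have k2 : reach p2 q1 by apply: (Klem w2p w1q); exact: rt_trans r2 r1'.
apply: (Flem hA hB p1A q2B k1).
apply: rt_trans (within hB q2B p2B) _; apply: rt_trans k2 _; exact: within hA q1A p1A.
Qed.

Lemma MQ_inv (A : {set P}) : is_invariant opens Vf (M_of opens Vf M A).
Proof.
apply/setP => x; rewrite inE; apply/andb_idr => hx; apply/asboolP.
move: hx; rewrite inE => /asboolP [g [[[hg ha ho] _] hp hq [t ht]]].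
set g' := fun s => g (s + t).
have eA : alpha opens Vf g' = alpha opens Vf g by rewrite /alpha alpha_raw_shift.
have eO : omega opens Vf g' = omega opens Vf g by rewrite /omega omega_raw_shift.
have eg' : essential opens Vf g' by split; rewrite ?eA ?eO //; exact: full_shift.
exists g'; split; last by rewrite /g' add0r.
split => // s; rewrite inE; apply/asboolP; exists g'; split.
- by split => // s'; rewrite inE.
- by rewrite eA.
- by rewrite eO.
- by exists s.
Qed.

End Morse.

Local Close Scope ring_scope.
Unset Implicit Arguments.

Theorem corollary4p14 (T : finType) (opens : {set {set T}})
  (Vf : {set {set T}}) (P : finType) (M : P -> {set T})
  (Qs : {set {set P}}) :
  is_topology opens -> T0_space opens ->
  multivector_field opens Vf ->
  is_invariant opens Vf [set: T] ->
  morse_predecomposition opens Vf M ->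
  (forall A : {set P}, A \in Qs <-> scc opens Vf M A) ->
  partition Qs [set: P] ->
  morse_decomposition opens Vf
    (fun Q : {A : {set P} | A \in Qs} => M_of opens Vf M (val Q)).
Proof.
move=> htop _ hVf _ hpre hQ hpart.
have hlink : forall g, ess_in opens Vf [set: T] g -> exists p q, link opens Vf (M p) (M q) g.
  by case: hpre.
have sig_eq : forall (A B : {set P}) (hA : A \in Qs) (hB : B \in Qs), A = B ->
    exist (fun A => A \in Qs) A hA = exist _ B hB.
  by move=> A B hA hB e; subst B; congr exist; exact: bool_irrelevance.
have DJ' := DJ htop hVf hpre hQ hpart.
have MQi := MQ_intro hpre (A := _).
have MQe := MQ_elim htop hVf (M := M).
have Mps := Mp_sub hpre.
have blkm := blk_mem hpart.
have inb := in_blk hpart.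
have sat_in : forall (A : {set P}) (hA : A \in Qs) p y,
    y \in M p -> y \in M_of opens Vf M A -> p \in A.
  move=> A hA p y yp yA.
  have e := DJ' _ _ y (blkm p) hA (subsetP (Mps _ _ (inb p)) y yp) yA.
  by rewrite -e inb.
split; first split.
- move=> [A hA] [B hB] /= ne; apply/setP => x; rewrite inE in_set0.
  apply/negP => /andP[xA xB]; apply: ne; apply: sig_eq; exact: DJ' hA hB xA xB.
- move=> [A hA] /=; split; first exact: MQ_inv.
  exists [set: T]; split.
  + by rewrite /is_closed setCT; case: htop.
  + exact: subsetT.
  + move=> x s hp _ hx hl; apply/allP => u hu.
    have [r1 r2] := path_rch hp hu.
    have [p [_ [w [_ [pA _ wp _ [rw _]]]]]] := MQe _ _ hx.
    have [_ [q [_ [w' [_ qA _ wq [_ rw']]]]]] := MQe _ _ hl.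
    exact: MQi _ _ _ _ _ _ pA qA wp wq (rt_trans _ _ _ _ _ rw r1) (rt_trans _ _ _ _ _ r2 rw').
- move=> g hg; have [p [q [hf ha ho]]] := hlink g hg.
  exists (exist _ (pblock Qs p) (blkm p)), (exist _ (pblock Qs q) (blkm q)); split => //=.
  + case/set0Pn: ha => y; rewrite inE => /andP[ya yp]; apply/set0Pn; exists y.
    by rewrite inE ya (subsetP (Mps _ _ (inb p))).
  + case/set0Pn: ho => y; rewrite inE => /andP[ya yp]; apply/set0Pn; exists y.
    by rewrite inE ya (subsetP (Mps _ _ (inb q))).
- move=> [A hA] /=; split; first exact: MQ_inv.
  move=> g hg hsub t; have [[hf _ _] _] := hg.
  have [p [q [_ ha ho]]] := hlink g hg.
  case/set0Pn: ha => y; rewrite inE => /andP[ya yp].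
  case/set0Pn: ho => z; rewrite inE => /andP[zo zq].
  have yA : y \in M_of opens Vf M A by apply: (subsetP hsub); rewrite inE ya.
  have zA : z \in M_of opens Vf M A by apply: (subsetP hsub); rewrite inE zo orbT.
  exact: MQi _ p q y z _ (sat_in A hA p y yp yA) (sat_in A hA q z zq zA) yp zq
    (alpha_reach htop hVf hf ya t) (omega_reach htop hVf hf zo t).
- exists (fun Q1 Q2 : {A : {set P} | A \in Qs} =>
     forall a b, a \in val Q2 -> b \in val Q1 -> reach opens Vf M a b); split.
  + move=> [A hA] a b /= ha hb; exact (within hQ hA ha hb).
  + move=> [x hx] [y hy] [z hz] /= h1 h2 a b ha hb.
    have [c hc] := blk_ne hpart hy.
    exact: rt_trans (h2 a c ha hc) (h1 c b hc hb).
  + move=> [x hx] [y hy] /= h1 h2; apply: sig_eq.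
    have [a ha] := blk_ne hpart hy; have [b hb] := blk_ne hpart hx.
    apply: esym; exact (Flem hQ hpart hy hx ha hb (h1 a b ha hb) (h2 b a hb ha)).
  + move=> [A hA] [B hB] g [hf hya hzo] a b /= ha hb.
    case/set0Pn: hya => y; rewrite inE => /andP[ya yA].
    case/set0Pn: hzo => z; rewrite inE => /andP[zo zB].
    have ryz := rt_trans _ _ _ _ _ (alpha_reach htop hVf hf ya 0%R) (omega_reach htop hVf hf zo 0%R).
    have [p [_ [w [_ [pA _ wp _ [rw _]]]]]] := MQe _ _ yA.
    have [_ [q [_ [w' [_ qB _ wq [_ rw']]]]]] := MQe _ _ zB.
    have k := Klem hpre wp wq (rt_trans _ _ _ _ _ rw (rt_trans _ _ _ _ _ ryz rw')).
    exact (rt_trans _ _ _ _ _ (within hQ hA ha pA) (rt_trans _ _ _ _ _ k (within hQ hB qB hb))).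
Qed.
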